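(* Let $f$ be a SAT formula and consider the tensor network of its Boolean state, in which each variable wire carries the tensor $\langle 0|+\langle 1|$, each variable occurring in $k$ clauses is copied by a degree-$k$ COPY-tensor $|0\rangle\langle 0|^{\otimes k}+|1\rangle\langle 1|^{\otimes k}$ wired to those clauses (a variable occurring in exactly one clause is wired directly), and each clause is a tensor vertex. Let $k$ be the treewidth of (the underlying graph of) this network and $c$ the number of COPY-tensors. Then $k\le c$.
   Context: The underlying graph of a tensor network has the tensors as vertices and the wires as edges. Treewidth is the usual graph-theoretic treewidth. *)

(* Defs.v *)
From mathcomp Require Import all_boot all_order.
Set Implicit Arguments. Unset Strict Implicit. Unset Printing Implicit Defensive.

(* A graph is given by a vertex set V : {set T} over a finType T and an
   adjacency relation E (only edges between vertices of V matter). *)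

(* A (finite, nonempty) tree on the index set 'I_N.+1: irreflexive, symmetric,
   connected, with exactly N (undirected) edges, i.e. 2*N ordered pairs. *)
Definition is_tree (N : nat) (t : rel 'I_N.+1) : Prop :=
  [/\ irreflexive t, symmetric t, (forall i j, connect t i j)
    & #|[set p : 'I_N.+1 * 'I_N.+1 | t p.1 p.2]| = 2 * N].

Definition tree_decomp (T : finType) (V : {set T}) (E : rel T)
    (N : nat) (t : rel 'I_N.+1) (B : 'I_N.+1 -> {set T}) : Prop :=
  [/\ is_tree t,
      (forall i, B i \subset V),
      (forall x, x \in V -> exists i, x \in B i),
      (forall x y, x \in V -> y \in V -> E x y -> exists i, (x \in B i) && (y \in B i))
    & (forall x i j, x \in B i -> x \in B j ->
         connect [rel a b | [&& t a b, x \in B a & x \in B b]] i j)].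

Definition tw_width (T : finType) (N : nat) (B : 'I_N.+1 -> {set T}) : nat :=
  (\max_(i : 'I_N.+1) #|B i|).-1.

Definition treewidth_le (T : finType) (V : {set T}) (E : rel T) (k : nat) : Prop :=
  exists N (t : rel 'I_N.+1) (B : 'I_N.+1 -> {set T}),
    tree_decomp V E t B /\ tw_width B <= k.

(* A CNF formula over variables 'I_n with m clauses; clause j is a list of
   literals (variable, polarity). *)
Definition literal (n : nat) := ('I_n * bool)%type.
Definition cnf (n m : nat) := 'I_m -> seq (literal n).

Section Network.
Variables (n m : nat) (f : cnf n m).

Definition occurs (v : 'I_n) (j : 'I_m) : bool :=
  has (fun l : literal n => l.1 == v) (f j).

Definition occ (v : 'I_n) : nat := #|[set j | occurs v j]|.

(* v gets a COPY tensor iff it occurs in at least two clauses *)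
Definition has_copy (v : 'I_n) : bool := 1 < occ v.

(* Potential tensor vertices:
     inl (inl v) : the <0|+<1| tensor on the wire of variable v,
     inl (inr v) : the COPY tensor of variable v (present iff has_copy v),
     inr j       : the tensor of clause j. *)
Definition tn_vertex := ('I_n + 'I_n + 'I_m)%type.

Definition tn_V : {set tn_vertex} :=
  [set x : tn_vertex | match x with
                       | inl (inl _) => true
                       | inl (inr v) => has_copy v
                       | inr _ => true end].

Definition tn_wire (x y : tn_vertex) : bool :=
  match x, y with
  | inl (inl v), inl (inr w) => (v == w) && has_copy v
  | inl (inl v), inr j => (occ v == 1) && occurs v j       (* var wired directly *)
  | inl (inr v), inr j => has_copy v && occurs v j
  | _, _ => false
  end.

Definition tn_E : rel tn_vertex := fun x y => tn_wire x y || tn_wire y x.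

Definition n_copy : nat := #|[set v | has_copy v]|.

End Network.

(* Main.v *)
Require Import Defs.
From mathcomp Require Import all_boot all_order.
From mathcomp Require Import zify.
Set Implicit Arguments. Unset Strict Implicit. Unset Printing Implicit Defensive.

Lemma transfer (T K : finType) (N : nat) (HK : #|K| = N.+1) (V : {set T}) (E : rel T)
  (r : rel K) (BK : K -> {set T}) k :
  irreflexive r -> symmetric r -> (forall a b, connect r a b) ->
  #|[set p : K * K | r p.1 p.2]| = 2 * N ->
  (forall a, BK a \subset V) -> (forall x, x \in V -> exists a, x \in BK a) ->
  (forall x y, x \in V -> y \in V -> E x y -> exists a, (x \in BK a) && (y \in BK a)) ->
  (forall x a b, x \in BK a -> x \in BK b ->
      connect [rel a b | [&& r a b, x \in BK a & x \in BK b]] a b) ->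
  (forall a, #|BK a| <= k.+1) -> treewidth_le V E k.
Proof.
move=> irr sym con card sub cov edg run sz.
pose h (i : 'I_N.+1) : K := enum_val (cast_ord (esym HK) i).
pose g (x : K) : 'I_N.+1 := cast_ord HK (enum_rank x).
have hK : cancel g h by move=> x; rewrite /h /g cast_ordK enum_rankK.
have gK : cancel h g by move=> i; rewrite /h /g enum_valK cast_ordKV.
have tr : forall (s : rel K) a b, connect s a b ->
    connect [rel i j | s (h i) (h j)] (g a) (g b).
  move=> s a b /connectP [p Hp ->]; elim: p a Hp => [|c p IH] a /=.
    by rewrite connect0.
  move/andP=> [sac Hp]; apply: connect_trans (IH _ Hp).
  by apply: connect1; rewrite /= !hK.
exists N, [rel i j | r (h i) (h j)], (fun i => BK (h i)); split; last first.
  rewrite /tw_width.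
  have: \max_(i : 'I_N.+1) #|BK (h i)| <= k.+1 by apply/bigmax_leqP => i _.
  lia.
split.
- split.
  + by move=> i /=; rewrite irr.
  + by move=> i j /=; rewrite sym.
  + by move=> i j; rewrite -(gK i) -(gK j); apply: tr.
  + rewrite -card.
    have ->: [set p : 'I_N.+1 * 'I_N.+1 | [rel i j | r (h i) (h j)] p.1 p.2] =
        (fun q : K * K => (g q.1, g q.2)) @: [set p : K * K | r p.1 p.2].
      apply/setP => [[i j]]; rewrite inE /=; apply/idP/imsetP => [H|[[a b] Hab [-> ->]]].
        by exists (h i, h j); rewrite ?inE ?gK.
      by rewrite inE /= in Hab; rewrite !hK.
    apply: card_imset => [[a b] [c d]] /= [].
    move=> E1 E2; have E1' : g a = g c by apply: val_inj.
    have E2' : g b = g d by apply: val_inj.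
    by rewrite -(hK a) E1' hK -(hK b) E2' hK.
- by move=> i; apply: sub.
- by move=> x /cov [a Ha]; exists (g a); rewrite hK.
- by move=> x y xV yV /(edg _ _ xV yV) [a Ha]; exists (g a); rewrite hK.
- move=> x i j xi xj; rewrite -(gK i) -(gK j).
  have := tr _ _ _ (run x _ _ xi xj); rewrite !gK; exact.
Qed.

Section Constr.
Variables (n m : nat) (f : cnf n m).
Local Notation TV := (tn_vertex n m).

Definition clauseof (v : 'I_n) : option 'I_m :=
  if occ f v == 1 then [pick j | occurs f v j] else None.

Lemma clauseofP v j : occ f v == 1 -> occurs f v j -> clauseof v = Some j.
Proof.
rewrite /clauseof /occ => H1 oj; rewrite H1.
move/cards1P: H1 => [j0 Hj0].
case: pickP => [j' oj'|H]; last by rewrite H in oj.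
have : j \in [set j | occurs f v j] by rewrite inE.
have : j' \in [set j | occurs f v j] by rewrite inE.
by rewrite Hj0 !inE => /eqP -> /eqP ->.
Qed.

Lemma clauseof_occ v j : clauseof v = Some j -> (occ f v == 1) && occurs f v j.
Proof.
rewrite /clauseof; case: eqP => // H; case: pickP => // j' oj' [<-].
by rewrite oj' andbT; apply/eqP.
Qed.

Lemma clauseof_nocopy v j : clauseof v = Some j -> has_copy f v = false.
Proof. by move/clauseof_occ/andP=> [/eqP H _]; rewrite /has_copy H. Qed.

Definition K := option TV.

Definition par (a : K) : K :=
  match a with
  | Some (inl (inl v)) => if clauseof v is Some j then Some (inr j) else None
  | _ => None end.

Lemma parpar a : par (par a) = None.
Proof. by case: a => [[[v|v]|j]|] //=; case: clauseof. Qed.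

Lemma par_neq a : a != None -> par a != a.
Proof. by case: a => [[[v|v]|j]|] //=; case: clauseof. Qed.

Definition r : rel K := fun a b =>
  ((a != None) && (b == par a)) || ((b != None) && (a == par b)).

Lemma r_irr : irreflexive r.
Proof.
move=> a; rewrite /r orbb; apply/negP => /andP [H /eqP E].
by move: (par_neq H); rewrite -E eqxx.
Qed.

Lemma r_sym : symmetric r.
Proof. by move=> a b; rewrite /r orbC. Qed.

Lemma r_root a : connect r a None.
Proof.
case Ha: (par a) => [b|].
  apply: connect_trans (connect1 (_ : r a (Some b))) (connect1 (_ : r (Some b) None)).
    by rewrite /r Ha eqxx; case: a Ha => //.
  by rewrite /r -Ha parpar eqxx Ha.
case: a Ha => [a|] Ha; last by rewrite connect0.
by apply: connect1; rewrite /r Ha eqxx.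
Qed.

Lemma r_con a b : connect r a b.
Proof.
apply: connect_trans (r_root a) _; rewrite (sym_connect_sym r_sym); exact: r_root.
Qed.


Lemma r_card : #|[set p : K * K | r p.1 p.2]| = 2 * #|{: TV}|.
Proof.
pose S := [set a : K | a != None].
have cS : #|S| = #|{: TV}|.
  have -> : S = [set~ None] by apply/setP => a; rewrite !inE.
  by rewrite cardsC1 card_option.
have -> : [set p : K * K | r p.1 p.2] =
   ((fun a => (a, par a)) @: S) :|: ((fun a => (par a, a)) @: S).
  apply/setP => [[a b]]; rewrite !inE /r /=; apply/idP/idP.
    case/orP => /andP [Ha /eqP ->].
      by apply/orP; left; apply/imsetP; exists a; rewrite ?inE.
    by apply/orP; right; apply/imsetP; exists b; rewrite ?inE.
  case/orP => /imsetP [c]; rewrite inE => Hc [-> ->].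
    by rewrite Hc eqxx.
  by rewrite Hc eqxx orbT.
rewrite cardsU.
have -> : (fun a => (a, par a)) @: S :&: (fun a => (par a, a)) @: S = set0.
  apply/setP => [[a b]]; rewrite !inE; apply/negP => /andP [].
  move=> /imsetP [c Hc [-> ->]] /imsetP [d]; rewrite inE => Hd [E1 E2].
  by move: Hd; rewrite -E2 E1 parpar.
rewrite cards0 subn0 !card_imset ?cS; first lia.
  by move=> a b [].
by move=> a b [].
Qed.


Definition C : {set TV} :=
  [set x : TV | if x is inl (inr v) then has_copy f v else false].

Lemma card_C : #|C| = n_copy f.
Proof.
rewrite /n_copy.
have -> : C = (fun v => (inl (inr v) : TV)) @: [set v | has_copy f v].
  apply/setP => x; rewrite inE; apply/idP/imsetP.
    by case: x => [[v|v]|j] // Hv; exists v; rewrite ?inE.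
  by move=> [v]; rewrite inE => Hv ->.
by apply: card_imset => v w [].
Qed.

Definition vbag (v : 'I_n) : {set TV} :=
  (inl (inl v) : TV) |: (if has_copy f v then [set (inl (inr v) : TV)]
          else if clauseof v is Some j then [set (inr j : TV)] else set0).

Definition BK (a : K) : {set TV} :=
  match a with
  | None => C
  | Some (inr j) => (inr j : TV) |: C
  | Some (inl (inr _)) => C
  | Some (inl (inl v)) => vbag v end.

Lemma BK_size a : 0 < n_copy f -> #|BK a| <= (n_copy f).+1.
Proof.
move=> c0; rewrite -card_C; case: a => [[[v|v]|j]|] /=; last first.
- exact: leqW.
- by rewrite cardsU1; case: (_ \notin _) => //; exact: leqW.
- exact: leqW.
rewrite card_C.
rewrite /vbag cardsU1; apply: leq_trans (_ : 1 + 1 <= _); last lia.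
apply: leq_add; first by case: (_ \notin _).
case: has_copy; first by rewrite cards1.
by case: clauseof => [j|]; rewrite ?cards1 ?cards0.
Qed.

Lemma BK_sub a : BK a \subset tn_V f.
Proof.
have CV : C \subset tn_V f by apply/subsetP => [[[v|v]|j]]; rewrite !inE.
case: a => [[[v|v]|j]|] //=; last first.
- by rewrite subUset sub1set CV inE.
apply/subsetP => x; rewrite /vbag !inE; case/orP => [/eqP -> //|].
case Hc: has_copy; first by move/set1P ->.
by case: clauseof => [j|]; rewrite ?inE // => /eqP ->.
Qed.

Lemma BK_cov x : x \in tn_V f -> exists a, x \in BK a.
Proof.
case: x => [[v|v]|j] Hx.
- by exists (Some (inl (inl v))); rewrite /= /vbag setU11.
- by exists None; rewrite /= inE; rewrite inE in Hx.
- by exists (Some (inr j)); rewrite /= setU11.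
Qed.


Lemma clauseof_copy v : has_copy f v -> clauseof v = None.
Proof. by case E: clauseof => [j|] //; rewrite (clauseof_nocopy E). Qed.

Lemma wire_cov x y : tn_wire f x y -> exists a, (x \in BK a) && (y \in BK a).
Proof.
case: x => [[v|v]|j]; case: y => [[w|w]|k] //=.
- move=> /andP [/eqP <- Hc]; exists (Some (inl (inl v))).
  by rewrite /= /vbag setU11 Hc !inE eqxx orbT.
- move=> /andP [H1 H2]; exists (Some (inl (inl v))).
  have Hj := clauseofP H1 H2.
  by rewrite /= /vbag setU11 (clauseof_nocopy Hj) Hj !inE eqxx orbT.
- move=> /andP [H1 H2]; exists (Some (inr k)).
  by rewrite /= setU11 !inE H1 orbT.
Qed.

Lemma BK_edge x y : x \in tn_V f -> y \in tn_V f -> tn_E f x y ->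
  exists a, (x \in BK a) && (y \in BK a).
Proof.
move=> _ _ /orP [/wire_cov //|/wire_cov [a Ha]].
by exists a; rewrite andbC.
Qed.

Definition hub (x : TV) : K :=
  match x with inl (inl v) => Some (inl (inl v)) | inl (inr _) => None
  | inr j => Some (inr j) end.

Lemma hub_conn x a : x \in BK a ->
  connect [rel a b | [&& r a b, x \in BK a & x \in BK b]] a (hub x).
Proof.
case: x => [[v|v]|j]; case: a => [[[w|w]|k]|] /=;
  rewrite ?inE /= ?orbF //.
- case/orP => [/eqP [->]|]; first exact: connect0.
  by case: has_copy; [rewrite inE | case: clauseof => [j|]; rewrite inE].
- case Hc: (has_copy f w); last by case: clauseof => [j|]; rewrite inE.
  rewrite inE => /eqP [->]; apply: connect1.
  by rewrite /= /r /= (clauseof_copy Hc) /vbag Hc !inE eqxx Hc /= eqxx.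
- move=> Hc; apply: connect1; rewrite /= /r /= !inE Hc.
  done.
- move=> Hc; apply: connect1; rewrite /= /r /= !inE Hc.
  by rewrite ?orbT.
- case Hc: (has_copy f w); first by rewrite inE.
  case E: clauseof => [k|]; rewrite inE // => /eqP [->]; apply: connect1.
  by rewrite /= /r /= E /vbag Hc E !inE !eqxx !orbT.
- move=> /eqP [E]; rewrite E; exact: connect0.
Qed.


Lemma BK_run x a b : x \in BK a -> x \in BK b ->
  connect [rel a b | [&& r a b, x \in BK a & x \in BK b]] a b.
Proof.
move=> Ha Hb; apply: connect_trans (hub_conn Ha) _.
rewrite (sym_connect_sym (_ : symmetric _)); first exact: hub_conn.
by move=> c d /=; rewrite r_sym (andbC (x \in BK c)).
Qed.

End Constr.

Theorem proposition2 (n m : nat) (f : cnf n m) :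
  0 < n_copy f ->
  treewidth_le (tn_V f) (tn_E f) (n_copy f).
Proof.
move=> c0.
apply: (@transfer _ (option (tn_vertex n m)) #|{: tn_vertex n m}| (card_option _)
          _ _ (@r n m f) (@BK n m f)).
- exact: r_irr.
- exact: r_sym.
- exact: r_con.
- exact: r_card.
- exact: BK_sub.
- exact: BK_cov.
- exact: BK_edge.
- exact: BK_run.
- by move=> a; apply: BK_size.
Qed.
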